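(* For all $m,n \in \mathbb{N}_0$, all words $v \in \mathbb{W}_m$ and $w \in \mathbb{W}_{m+n}$, \[ \mathbb{P}\{U_{m+n}= w \mid U_m= v\} = \binom{w}{v} \frac{n!\,n!}{(2m+1)(2m+2)\cdots(2(m+n))}. \]
   Context: For $n \in \mathbb{N}_0$, $\mathbb{W}_n$ denotes the set of words over the alphabet $\{a,b\}$ with exactly $n$ letters $a$ and $n$ letters $b$, and $\mathbb{W} := \bigsqcup_{n} \mathbb{W}_n$. For words $w,v$, $\binom{w}{v}$ denotes the number of occurrences of $v$ as a (not necessarily contiguous) sub-word of $w$, i.e. the number of strictly increasing maps $g:\{1,\dots,|v|\}\to\{1,\dots,|w|\}$ with $w_{g(k)}=v_k$ for all $k$. The Markov chain $(U_n)_{n\in\mathbb{N}_0}$ on $\mathbb{W}$ starts at $U_0=\emptyset$ (the empty word); given $U_n \in \mathbb{W}_n$, first a letter $a$ is inserted uniformly at random into one of the $2n+1$ slots of $U_n$, then a letter $b$ is inserted uniformly at random into one of the $2n+2$ slots of the resulting word, giving $U_{n+1}$. Equivalently, for $v\in\mathbb{W}_m$, $w\in\mathbb{W}_{m+1}$, $\mathbb{P}\{U_{m+1}=w\mid U_m=v\}=\binom{w}{v}/((2m+2)(2m+1))$. *)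

(* Defs.v *)
(* Words over {a,b} are encoded as seq bool: true = a, false = b. *)
From mathcomp Require Import all_boot all_order all_algebra.
Set Implicit Arguments. Unset Strict Implicit. Unset Printing Implicit Defensive.
Import Order.TTheory GRing.Theory Num.Theory.
Local Open Scope ring_scope.

Definition word := seq bool.
Definition la : bool := true.
Definition lb : bool := false.

Definition inW (n : nat) (w : word) : bool :=
  (count (pred1 la) w == n) && (count (pred1 lb) w == n).

Fixpoint allwords (L : nat) : seq word :=
  if L is L'.+1 then [seq b :: s | b <- [:: true; false], s <- allwords L']
  else [:: [::]].

(* binom w v : number of strictly increasing position maps g with w_{g k} = v_k,
   i.e. number of selections (masks) of positions of w spelling v *)
Definition subword_count (w v : word) : nat :=
  count (fun m : bitseq => mask m w == v) (allwords (size w)).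

Definition ins (x : bool) (i : nat) (s : word) : word := take i s ++ x :: drop i s.

(* one-step transition probability: insert a uniformly into one of the size v + 1
   slots, then b uniformly into one of the size v + 2 slots *)
Definition step (v w : word) : rat :=
  (\sum_(i <- iota 0 (size v).+1) \sum_(j <- iota 0 (size v).+2)
     ((ins lb j (ins la i v) == w) : nat)%:R)
  / (((size v).+1)%:R * ((size v).+2)%:R).

(* n-step transition probability P{U_{k+n} = w | U_k = v} of the Markov chain *)
Fixpoint nstep (n : nat) (v w : word) : rat :=
  if n is n'.+1 then \sum_(u <- allwords (size v).+2) step v u * nstep n' u w
  else ((v == w) : nat)%:R.

(* law of U_k, with U_0 = empty word *)
Definition law (k : nat) (v : word) : rat := nstep k [::] v.

Definition joint (m n : nat) (v w : word) : rat := law m v * nstep n v w.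

Definition condP (m n : nat) (v w : word) : rat := joint m n v w / law m v.

(* Main.v *)
Require Import Defs.
From mathcomp Require Import all_boot all_order all_algebra.
From mathcomp Require Import zify ring.
Import Order.TTheory GRing.Theory Num.Theory.
Local Open Scope ring_scope.
Local Open Scope nat_scope.

Fixpoint sc (w v : word) : nat :=
  match w with
  | [::] => (v == [::]) : nat
  | z :: w' => match v with
               | [::] => 1
               | y :: v' => sc w' v + (z == y) * sc w' v'
               end
  end.

Lemma sc_nil w : sc w [::] = 1.
Proof. by case: w. Qed.

Lemma subword_countE w v : subword_count w v = sc w v.
Proof.
rewrite /subword_count; elim: w v => [|z w IH] v /=.
  by rewrite /= addn0; case: v.
rewrite cats0 count_cat !count_map.
rewrite (eq_count (a1 := preim _ _) (a2 := fun m => z :: mask m w == v)) //.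
rewrite (eq_count (a1 := preim _ _) (a2 := fun m => mask m w == v)) //.
case: v => [|y v].
  by rewrite (eq_count (a2 := pred0)) ?count_pred0 //= add0n IH sc_nil.
rewrite IH addnC; congr (_ + _).
case: (z =P y) => [->|ne] /=.
  by rewrite mul1n -IH; apply: eq_count => m /=; rewrite eqseq_cons eqxx.
rewrite mul0n (eq_count (a2 := pred0)) ?count_pred0 // => m /=.
by rewrite eqseq_cons; case: eqP.
Qed.
Lemma ins0 x v : ins x 0 v = x :: v.
Proof. by rewrite /ins take0 drop0. Qed.
Lemma insS x i y v : ins x i.+1 (y :: v) = y :: ins x i v.
Proof. by []. Qed.
Lemma size_ins x i v : size (ins x i v) = (size v).+1.
Proof. by rewrite /ins size_cat /= size_take size_drop; case: ltnP => H; lia. Qed.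
Lemma count_ins (p : pred bool) x i v : count p (ins x i v) = count p v + p x.
Proof. by rewrite -{2}(cat_take_drop i v) /ins !count_cat /=; lia. Qed.

Lemma sc_long w v : size w < size v -> sc w v = 0.
Proof.
elim: w v => [|z w IH] [|y v] //= H.
by rewrite !IH //=; lia.
Qed.

Lemma sc_same w v : size w = size v -> sc w v = (w == v).
Proof.
elim: w v => [|z w IH] [|y v] //= H.
rewrite sc_long /=; last by case: H => ->.
case: H => H.
by rewrite add0n IH // eqseq_cons; case: (z == y); case: (w == v).
Qed.

Lemma sum_iotaS n (F : nat -> nat) :
  \sum_(i <- iota 0 n.+1) F i = F 0 + \sum_(i <- iota 0 n) F i.+1.
Proof. by rewrite /= big_cons -[1]/(1 + 0) iotaDl big_map. Qed.

Lemma scSS z w y v : sc (z :: w) (y :: v) = sc w (y :: v) + (z == y) * sc w v.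
Proof. by []. Qed.

Lemma sum_ins_sc x w v :
  \sum_(i <- iota 0 (size v).+1) sc w (ins x i v) + count (pred1 x) v * sc w v
  = count (pred1 x) w * sc w v.
Proof.
elim: w v => [|z w IH] v.
  rewrite /= big1_seq; first by case: v => [|a v] /=; rewrite ?muln0 ?mul0n.
  by move=> i _; rewrite /ins; case: (take i v).
case: v => [|y v].
  rewrite /= big_cons big_nil ins0 /= sc_nil.
  have := IH [::]; rewrite /= big_cons big_nil ins0 /= sc_nil; lia.
rewrite sum_iotaS ins0.
under eq_bigr => i _ do rewrite insS scSS.
rewrite big_split -big_distrr scSS scSS.
have H1 := IH (y :: v).
have H2 := IH v.
rewrite sum_iotaS ins0 in H1.
rewrite (eq_bigr (fun i => sc w (y :: ins x i v))) in H1; last by move=> i _; rewrite insS.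
move: H1 H2; set A := \sum_(_ <- _) _; set B := \sum_(_ <- _) _.
rewrite /=.
clearbody A B; case: x z y {IH} A B => [] [] [] /= A B; nia.
Qed.

Lemma sum_ins_sub x w v :
  \sum_(i <- iota 0 (size v).+1) sc w (ins x i v)
  = (count (pred1 x) w - count (pred1 x) v) * sc w v.
Proof. have := sum_ins_sc x w v; rewrite mulnBl; lia. Qed.

Lemma allwordsS L : allwords L.+1 =
  [seq true :: s | s <- allwords L] ++ [seq false :: s | s <- allwords L].
Proof. by rewrite /= cats0. Qed.

Lemma mem_allwords L u : (u \in allwords L) = (size u == L).
Proof.
elim: L u => [|L IH] u; first by case: u.
rewrite allwordsS mem_cat; case: u => [|b u] /=.
  by apply/negP => /orP [] /mapP [].
apply/idP/idP.
  by move=> /orP [] /mapP [t Ht [_ ->]]; rewrite /= eqSS -IH.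
rewrite eqSS -IH => H; apply/orP; case: b; [left|right]; exact: map_f.
Qed.

Lemma uniq_allwords L : uniq (allwords L).
Proof.
elim: L => [|L IH] //; rewrite allwordsS cat_uniq.
have inj (b : bool) : injective (cons b) by move=> a c [].
rewrite (map_inj_uniq (inj true)) (map_inj_uniq (inj false)) IH andbT /=.
apply/hasPn => t /mapP [s _ ->]; by apply/negP => /mapP [r _] [].
Qed.

Lemma sum_pick (s : seq word) t (F : word -> nat) :
  uniq s -> t \in s -> \sum_(u <- s) (t == u) * F u = F t.
Proof.
move=> us ts; rewrite (bigD1_seq t) //= eqxx mul1n big1 ?addn0 //.
by move=> u; rewrite eq_sym => /negbTE ->.
Qed.

Definition ca (w : word) := count (pred1 la) w.
Definition cb (w : word) := count (pred1 lb) w.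

Definition Gval n v w :=
  ((size w == size v + n.*2) * sc w v * (ca w - ca v) ^_ n * (cb w - cb v) ^_ n)%N.

Definition Nn (v u : word) :=
  \sum_(i <- iota 0 (size v).+1) \sum_(j <- iota 0 (size v).+2)
     ((ins lb j (ins la i v) == u) : nat).

Lemma sum_ins_sub' x w u s : size u = s.+1 ->
  \sum_(j <- iota 0 s.+2) sc w (ins x j u)
  = (count (pred1 x) w - count (pred1 x) u) * sc w u.
Proof. by move=> <-; rewrite sum_ins_sub. Qed.

Lemma key_nat v w n :
  \sum_(u <- allwords (size v).+2) Nn v u * Gval n u w = Gval n.+1 v w.
Proof.
rewrite (eq_bigr (fun u => \sum_(i <- iota 0 (size v).+1) \sum_(j <- iota 0 (size v).+2)
     ((ins lb j (ins la i v) == u) * Gval n u w))); last first.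
  by move=> u _; rewrite /Nn big_distrl; apply: eq_bigr => i _; rewrite big_distrl.
transitivity (\sum_(i <- iota 0 (size v).+1) \sum_(j <- iota 0 (size v).+2)
   Gval n (ins lb j (ins la i v)) w).
  rewrite exchange_big; apply: eq_bigr => i _; rewrite exchange_big.
  apply: eq_bigr => j _; apply: sum_pick; first exact: uniq_allwords.
  by rewrite mem_allwords !size_ins.
set K := ((size w == size v + n.+1.*2) * (ca w - ca v).-1 ^_ n * (cb w - cb v).-1 ^_ n)%N.
transitivity (\sum_(i <- iota 0 (size v).+1) \sum_(j <- iota 0 (size v).+2)
   K * sc w (ins lb j (ins la i v))).
  apply: eq_bigr => i _; apply: eq_bigr => j _.
  rewrite /Gval /K /ca /cb !size_ins !count_ins /= !addn0 !subnDA !subn1.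
  have -> : ((size v).+2 + n.*2 = size v + n.+1.*2)%N by rewrite doubleS !addnS.
  by rewrite -!mulnA; congr muln; rewrite mulnC -!mulnA; congr muln; rewrite mulnC.
have E : forall i, count (pred1 lb) (ins la i v) = count (pred1 lb) v.
  by move=> i; rewrite count_ins /= addn0.
under eq_bigr => i _ do rewrite -big_distrr /= (@sum_ins_sub' lb w _ _ (size_ins la i v)) E mulnA.
rewrite -big_distrr /= sum_ins_sub /Gval /K /cb /ca.
rewrite !ffactnS; ring.
Qed.

Definition prodN s n := (\prod_(s.+1 <= i < (s + n.*2).+1) i)%N.

Lemma prodNS s n : prodN s n.+1 = (s.+1 * s.+2 * prodN s.+2 n)%N.
Proof.
unfold prodN; rewrite doubleS !addnS.
have h1 : s.+1 < (s + n.*2).+3 by lia.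
have h2 : s.+2 < (s + n.*2).+3 by lia.
rewrite (big_ltn h1) (big_ltn h2) mulnA; congr (_ * _ * _)%N.
Qed.

Local Open Scope ring_scope.

Lemma size_allwords L u : u \in allwords L -> size u = L.
Proof. by rewrite mem_allwords => /eqP. Qed.

Lemma stepE v u : step v u =
  (Nn v u)%:R / (((size v).+1)%:R * ((size v).+2)%:R) :> rat.
Proof.
rewrite /step /Nn natr_sum; congr (_ / _); apply: eq_bigr => i _.
by rewrite natr_sum.
Qed.

Lemma nstepS n v w : nstep n.+1 v w =
  \sum_(u <- allwords (size v).+2) step v u * nstep n u w.
Proof. by []. Qed.

Lemma Gmain n : forall v w,
  nstep n v w * (prodN (size v) n)%:R = (Gval n v w)%:R :> rat.
Proof.
elim: n => [|n IH] v w.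
  rewrite /= /prodN /Gval addn0 big_geq // mulr1 !ffactn0 !muln1.
  case: (eqVneq (size w) (size v)) => H.
    by rewrite mul1n sc_same // eq_sym.
  by rewrite mul0n; case: eqP => // E; rewrite E eqxx in H.
rewrite nstepS prodNS big_distrl.
rewrite (eq_big_seq (fun u => (Nn v u * Gval n u w)%:R)); last first.
  move=> u /size_allwords Hu.
  rewrite stepE [RHS]natrM -IH Hu !natrM.
  set a := ((size v).+1)%:R; set b := ((size v).+2)%:R; set P := (prodN _ n)%:R.
  transitivity ((Nn v u)%:R / (a * b) * nstep n u w * (a * b * P)); first by [].
  have H1 : a != 0 by rewrite /a pnatr_eq0.
  have H2 : b != 0 by rewrite /b pnatr_eq0.
  by clearbody a b P; field; rewrite H1 H2.
by rewrite -natr_sum key_nat.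
Qed.

Lemma size_bin (w : word) : size w = (count (pred1 la) w + count (pred1 lb) w)%N.
Proof. elim: w => [|b w IH] //=; rewrite IH; case: b => /=; lia. Qed.

Lemma prodN_gt0 s n : (0 < prodN s n)%N.
Proof.
rewrite /prodN big_seq_cond; apply: prodn_cond_gt0 => i /andP [].
by rewrite mem_index_iota; lia.
Qed.

Lemma nstep_formula m n v w : inW m v -> inW (m + n) w ->
  nstep n v w = (sc w v * (n`! * n`!))%N%:R / (prodN (2 * m) n)%:R.
Proof.
move=> /andP [/eqP Hva /eqP Hvb] /andP [/eqP Hwa /eqP Hwb].
have Sv : size v = (2 * m)%N by rewrite size_bin Hva Hvb; lia.
have Sw : size w = (2 * m + n.*2)%N by rewrite size_bin Hwa Hwb -addnn; lia.
have := Gmain n v w; rewrite /Gval /ca /cb Sv Sw Hva Hvb Hwa Hwb eqxx mul1n.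
have -> : (m + n - m = n)%N by lia.
rewrite ffactnn => H; rewrite mulnA -H.
have P0 : (prodN (2 * m) n)%:R != 0 :> rat.
  by rewrite pnatr_eq0 -lt0n prodN_gt0.
by rewrite mulfK.
Qed.

Local Open Scope ring_scope.

Theorem mainTheorem1 (m n : nat) (v w : word) :
  inW m v -> inW (m + n) w ->
  condP m n v w =
    (subword_count w v)%:R * ((n`! * n`!)%N)%:R
    / (\prod_(2 * m + 1 <= i < (2 * (m + n)).+1) i)%:R.
Proof.
move=> Hv Hw.
have L0 : law m v != 0.
  have H0 : inW (0 + m) v by rewrite add0n.
  rewrite /law (@nstep_formula 0 m) //=.
  rewrite mulf_neq0 // ?invr_eq0 pnatr_eq0 ?sc_nil ?mul1n -?lt0n ?muln_gt0 ?fact_gt0 //.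
  exact: prodN_gt0.
rewrite /condP /joint mulrAC divff // mul1r (@nstep_formula m n v w Hv Hw) subword_countE natrM.
congr (_ * _ / _%:R).
rewrite /prodN; congr (\prod_(_ <= i < _) _)%N; lia.
Qed.
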